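(* Let $n\ge1$, $\mathcal{D}=\{u\in(0,1)^n:\sum_{i=1}^nu_i<1\}$, $u_0=1-\sum_{i=1}^nu_i$. Let $k_{ij}=k_{ji}>0$ for $i\ne j$ and $k_{ii}=0$ ($i,j=0,\ldots,n$). Let $q_{ij}\ge0$, $r_{ij}=r_{ji}\ge0$ be constants with $q_{i0}=q_{0i}=r_{i0}=r_{ii}=0$, such that $(q_{ij}+r_{ij})_{i,j=1}^n$ is positive definite and $q_{ij}\ge r_{ij}$ for $i,j=1,\ldots,n$. Define, for $i,j=1,\ldots,n$, with $q_i(u)=\sum_{j=1}^nq_{ij}u_j$, $r_i(u)=\sum_{j=1}^nr_{ij}u_j$, $$A_{ij}(u)=(q_i(u)-r_i(u))\delta_{ij}+u_i\Big(q_{ij}-q_j(u)+r_{ij}+r_j(u)-\sum_{\ell=1}^nu_\ell(q_{\ell j}+r_{\ell j})\Big),$$ $$K_{ii}(u)=\sum_{\ell=0}^nk_{i\ell}u_\ell+k_{i0}u_i,\qquad K_{ij}(u)=(k_{i0}-k_{ij})u_i\ (i\ne j).$$ Then for every $u\in\mathcal{D}$, $K(u)$ is invertible and $K(u)^{-1}A(u)$ is positively stable, i.e., all its eigenvalues have positive real parts.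
   Context: $K(u)$ encodes the drag forces: $\sum_{j=0}^nk_{ij}u_iu_j(v_i-v_j)=(K(u)J)_i$ with $J_i=u_iv_i$ and $J_0=-\sum_{i\ge1}J_i$; the multiphase system then reads $\partial_tu=\operatorname{div}(K(u)^{-1}A(u)\nabla u)$. Positive definiteness of a matrix refers to its symmetric part. *)

(* Defs.v *)
From HB Require Import structures.
From mathcomp Require Import all_boot all_order all_algebra.
From mathcomp Require Import complex.
Set Implicit Arguments. Unset Strict Implicit. Unset Printing Implicit Defensive.
Import Order.TTheory GRing.Theory Num.Theory.
Local Open Scope ring_scope.

(* Indices 0..n are 'I_n.+1 ; index 0 is ord0, index i (1<=i<=n) is lift ord0 i
   for i : 'I_n. *)

Section Defs.
Variables (R : rcfType) (n : nat).

Definition in_simplex (u : 'I_n -> R) : Prop :=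
  (forall i, 0 < u i /\ u i < 1) /\ \sum_(i < n) u i < 1.

Definition u0 (u : 'I_n -> R) : R := 1 - \sum_(i < n) u i.

Definition ufull (u : 'I_n -> R) (l : 'I_n.+1) : R :=
  match unlift ord0 l with None => u0 u | Some j => u j end.

(* positive definiteness refers to the symmetric part *)
Definition posdef (M : 'M[R]_n) : Prop :=
  forall x : 'rV[R]_n, x != 0 ->
    0 < (x *m ((2%:R)^-1 *: (M + M^T)) *m x^T) ord0 ord0.

Definition qi (q : 'M[R]_n.+1) (u : 'I_n -> R) (i : 'I_n) : R :=
  \sum_(j < n) q (lift ord0 i) (lift ord0 j) * u j.

Definition Amat (q r : 'M[R]_n.+1) (u : 'I_n -> R) : 'M[R]_n :=
  \matrix_(i < n, j < n)
    ((qi q u i - qi r u i) * (i == j)%:R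
     + u i * (q (lift ord0 i) (lift ord0 j) - qi q u j
              + r (lift ord0 i) (lift ord0 j) + qi r u j
              - \sum_(l < n) u l * (q (lift ord0 l) (lift ord0 j)
                                    + r (lift ord0 l) (lift ord0 j)))).

Definition Kmat (k : 'M[R]_n.+1) (u : 'I_n -> R) : 'M[R]_n :=
  \matrix_(i < n, j < n)
    (if i == j then
       \sum_(l < n.+1) k (lift ord0 i) l * ufull u l + k (lift ord0 i) ord0 * u i
     else (k (lift ord0 i) ord0 - k (lift ord0 i) (lift ord0 j)) * u i).

Definition pos_stable (M : 'M[R]_n) : Prop :=
  forall z : R[i], eigenvalue (map_mx (fun x => x%:C%C) M) z -> 0 < complex.Re z.

End Defs.

(* Main.v *)
Require Import Defs.
From HB Require Import structures.
From mathcomp Require Import all_boot all_order all_algebra.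
From mathcomp Require Import complex.
From mathcomp Require Import ring lra.
Import Order.TTheory GRing.Theory Num.Theory.
Local Open Scope ring_scope.

Section Gen.
Variable R : rcfType.
Variable n : nat.

Definition qf (M : 'M[R]_n) (x : 'I_n -> R) := \sum_i \sum_j x i * M i j * x j.
Definition posf (M : 'M[R]_n) := forall x : 'I_n -> R, (exists i, x i != 0) -> 0 < qf M x.

Lemma sum_delta (g : 'I_n -> R) i : \sum_j (i == j)%:R * g j = g i.
Proof.
rewrite (bigD1 i) //= eqxx mul1r big1 ?addr0 // => j /negbTE.
by rewrite eq_sym => ->; rewrite mul0r.
Qed.

Lemma sum_delta' (g : 'I_n -> R) j : \sum_l g l * (l == j)%:R = g j.
Proof.
rewrite (bigD1 j) //= eqxx mulr1 big1 ?addr0 // => l /negbTE ->; by rewrite mulr0.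
Qed.

Lemma exists_nz {T : nzRingType} {v : 'rV[T]_n} : v != 0 -> exists i, v 0 i != 0.
Proof.
move=> nz; case/boolP: [exists i, v 0 i != 0] => [/existsP//|/existsPn H].
case/eqP: nz; apply/rowP => i; rewrite mxE; move: (H i); by rewrite negbK => /eqP.
Qed.

Lemma qf_ge0 M x : posf M -> 0 <= qf M x.
Proof.
move=> PM; case/boolP: [exists i, x i != 0] => [/existsP/PM/ltW//|/existsPn H].
rewrite /qf big1 // => i _; move: (H i); rewrite negbK => /eqP ->.
by rewrite big1 // => j _; rewrite !mul0r.
Qed.

Lemma posf_unit M : posf M -> M \in unitmx.
Proof.
move=> PM; rewrite unitmxE unitfE; apply/negP => /det0P [v nzv vM].
have [i hi] := exists_nz nzv.
have := PM (fun i => v 0 i) (ex_intro _ i hi).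
rewrite /qf exchange_big /= big1 ?ltxx // => j _.
rewrite -mulr_suml.
have -> : \sum_i v 0 i * M i j = (v *m M) 0 j by rewrite mxE.
by rewrite vM mxE mul0r.
Qed.

Lemma form_row (N : 'M[R]_n) (x : 'I_n -> R) :
  ((\row_i x i) *m N *m (\row_i x i)^T) ord0 ord0 = qf N x.
Proof.
rewrite /qf mxE exchange_big /=; apply: eq_bigr => j _.
rewrite !mxE mulr_suml; apply: eq_bigr => i _; by rewrite !mxE.
Qed.

Lemma posdef_posf (M : 'M[R]_n) : posdef M -> posf M.
Proof.
move=> PD x [i hi].
have nz : (\row_i x i) != 0.
  apply/negP => /eqP/rowP/(_ i); rewrite !mxE => /eqP; by rewrite (negbTE hi).
have := PD _ nz; rewrite form_row /qf.
have -> : \sum_i0 \sum_j x i0 * (2%:R^-1 *: (M + M^T)) i0 j * x j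
   = 2%:R^-1 * (\sum_i0 \sum_j x i0 * M i0 j * x j + \sum_i0 \sum_j x i0 * M j i0 * x j).
  rewrite -big_split mulr_sumr; apply: eq_bigr => a _.
  rewrite -big_split mulr_sumr; apply: eq_bigr => b _.
  rewrite !mxE /=; ring.
rewrite [X in _ + X]exchange_big /=.
have -> : \sum_j \sum_i0 x i0 * M j i0 * x j = \sum_i0 \sum_j x i0 * M i0 j * x j.
  apply: eq_bigr => a _; apply: eq_bigr => b _; ring.
move=> h; have: 0 < 2%:R^-1 * (2%:R * \sum_i0 \sum_j x i0 * M i0 j * x j).
  by rewrite mulr_natl mulr2n.
by rewrite mulrA mulVf ?pnatr_eq0 // mul1r.
Qed.

Local Notation C := (R[i]).
Lemma ReM3 (w1 w2 : C) (m : R) :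
  complex.Re (w1 * m%:C%C * conjc w2) = m * (complex.Re w1 * complex.Re w2 + complex.Im w1 * complex.Im w2).
Proof. case: w1 => a b; case: w2 => c d. rewrite /=. ring. Qed.
Lemma ImM3 (w1 w2 : C) (m : R) :
  complex.Im (w1 * m%:C%C * conjc w2) = m * (complex.Im w1 * complex.Re w2 - complex.Re w1 * complex.Im w2).
Proof. case: w1 => a b; case: w2 => c d. rewrite /=. ring. Qed.
Lemma ReM (w1 w2 : C) :
  complex.Re (w1 * w2) = complex.Re w1 * complex.Re w2 - complex.Im w1 * complex.Im w2.
Proof. by case: w1 => a b; case: w2 => c d. Qed.
Lemma ReD (w1 w2 : C) : complex.Re (w1 + w2) = complex.Re w1 + complex.Re w2.
Proof. by case: w1 => a b; case: w2 => c d. Qed.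
Lemma ImD (w1 w2 : C) : complex.Im (w1 + w2) = complex.Im w1 + complex.Im w2.
Proof. by case: w1 => a b; case: w2 => c d. Qed.
Lemma nzC {w : C} : w != 0 -> complex.Re w != 0 \/ complex.Im w != 0.
Proof. case: w => a b; rewrite eq_complex /= negb_and => /orP; tauto. Qed.

Definition psi (y : 'rV[C]_n) (M : 'M[R]_n) :=
  \sum_j (y *m map_mx (real_complex R) M) 0 j * conjc (y 0 j).

Lemma Re_psi (y : 'rV[C]_n) (M : 'M[R]_n) : complex.Re (psi y M) =
  qf M (fun i => complex.Re (y 0 i)) + qf M (fun i => complex.Im (y 0 i)).
Proof.
rewrite /psi /qf (big_morph _ ReD (erefl _)) [X in _ = X + _]exchange_big [X in _ = _ + X]exchange_big -big_split /=.
apply: eq_bigr => j _; rewrite mxE mulr_suml (big_morph _ ReD (erefl _)) -big_split /=.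
apply: eq_bigr => i _; rewrite mxE ReM3 /=; ring.
Qed.

Lemma Im_psi (y : 'rV[C]_n) (M : 'M[R]_n) : (forall i j, M i j = M j i) -> complex.Im (psi y M) = 0.
Proof.
move=> Ms.
rewrite /psi (big_morph _ ImD (erefl _)).
under eq_bigr => j _ do rewrite mxE mulr_suml (big_morph _ ImD (erefl _)).
under eq_bigr => j _ do under eq_bigr => i _ do rewrite mxE ImM3 mulrBr.
rewrite /=.
under eq_bigr => j _ do rewrite sumrB.
rewrite sumrB; apply/eqP; rewrite subr_eq0 [X in _ == X]exchange_big /=; apply/eqP.
apply: eq_bigr => a _; apply: eq_bigr => b _; rewrite Ms; ring.
Qed.

Lemma pos_pair (M : 'M[R]_n) (y : 'rV[C]_n) : posf M -> y != 0 ->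
  0 < qf M (fun i => complex.Re (y 0 i)) + qf M (fun i => complex.Im (y 0 i)).
Proof.
move=> PM nz; have [i hi] := exists_nz nz.
have h1 := qf_ge0 _ (fun i => complex.Re (y 0 i)) PM.
have h2 := qf_ge0 _ (fun i => complex.Im (y 0 i)) PM.
case: (nzC hi) => h.
  have := PM (fun i => complex.Re (y 0 i)) (ex_intro (fun i => complex.Re (y 0 i) != 0) i h); lra.
have := PM _ (ex_intro (fun i => complex.Im (y 0 i) != 0) i h); lra.
Qed.

Lemma stable_key (S P : 'M[R]_n) (y : 'rV[C]_n) (z : C) :
  (forall i j, S i j = S j i) -> posf S -> posf P -> y != 0 ->
  y *m map_mx (real_complex R) P = z *: (y *m map_mx (real_complex R) S) ->
  0 < complex.Re z.
Proof.
move=> Ss PS PP nz E.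
have E2 : psi y P = z * psi y S.
  rewrite /psi mulr_sumr; apply: eq_bigr => j _; by rewrite E mxE mulrA.
have := congr1 (@complex.Re R) E2.
rewrite ReM Im_psi // mulr0 subr0 !Re_psi.
have := pos_pair _ _ PS nz; have := pos_pair _ _ PP nz.
set a := _ + _; set b := _ + _ => ha hb e.
rewrite e in ha; nra.
Qed.

End Gen.
Arguments sum_delta {R n}.
Arguments sum_delta' {R n}.
Arguments qf {R n}.
Arguments posf {R n}.
Arguments qf_ge0 {R n}.
Arguments posf_unit {R n}.
Arguments posdef_posf {R n}.
Arguments stable_key {R n}.

Section Spec.
Variables (R : rcfType) (n : nat) (k q r : 'M[R]_n.+1) (u : 'I_n -> R).
Hypothesis hk_sym : forall i j, k i j = k j i.
Hypothesis hk_pos : forall i j, i != j -> 0 < k i j.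
Hypothesis hk_diag : forall i, k i i = 0.
Hypothesis hupos : forall i, 0 < u i.
Hypothesis hu0 : 0 < u0 u.

Local Notation kk i j := (k (lift ord0 i) (lift ord0 j)).
Local Notation k0 i := (k (lift ord0 i) ord0).

Lemma sum_pos (f : 'I_n -> R) i0 : (forall i, 0 <= f i) -> 0 < f i0 -> 0 < \sum_i f i.
Proof.
move=> h0 h1; rewrite (bigD1 i0) //=.
have : 0 <= \sum_(i | i != i0) f i by apply: sumr_ge0.
lra.
Qed.

Lemma sum_delta2 (g : 'I_n -> R) j : \sum_l (l == j)%:R * g l = g j.
Proof. under eq_bigr => l _ do rewrite mulrC. exact: sum_delta'. Qed.

Definition Hm : 'M[R]_n := \matrix_(i, j) ((i == j)%:R / u i + (u0 u)^-1).

Lemma Hmul (M : 'M[R]_n) i j : (Hm *m M) i j = M i j / u i + (\sum_l M l j) / u0 u.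
Proof.
rewrite mxE. under eq_bigr => l _ do rewrite mxE mulrDl.
rewrite big_split /=; congr (_ + _).
  rewrite -(sum_delta (fun l => M l j / u i)); apply: eq_bigr => l _; ring.
by rewrite -mulr_sumr mulrC.
Qed.

Lemma u_neq0 i : u i != 0. Proof. by rewrite gt_eqF. Qed.
Lemma u0_neq0 : u0 u != 0. Proof. by rewrite gt_eqF. Qed.

Lemma Kentry i j : Kmat k u i j =
  (i == j)%:R * (k0 i * u0 u + \sum_m kk i m * u m) + (k0 i - kk i j) * u i.
Proof.
rewrite mxE big_ord_recl /ufull unlift_none.
under eq_bigr => m _ do rewrite liftK.
case: (eqVneq i j) => [<-|ne]; first rewrite hk_diag /=. ring.
rewrite mul0r add0r.  done.
Qed.

Definition cc := \sum_l k0 l * u l.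

Lemma Kcol j : \sum_l Kmat k u l j = k0 j * u0 u + cc.
Proof.
under eq_bigr => l _ do rewrite Kentry.
rewrite big_split /= sum_delta2.
have -> : \sum_l (k0 l - kk l j) * u l = cc - \sum_m kk j m * u m.
  rewrite /cc -sumrB; apply: eq_bigr => l _; by rewrite [kk l j]hk_sym mulrBl.
ring.
Qed.

Definition Dd i := (k0 i * u0 u + \sum_m kk i m * u m) / u i.

Lemma Sentry i j : (Hm *m Kmat k u) i j =
  (i == j)%:R * Dd i + k0 i + k0 j - kk i j + cc / u0 u.
Proof.
rewrite Hmul Kcol Kentry /Dd.
have := u_neq0 i; have := u0_neq0 => h1 h2.
field. by rewrite h1 h2.
Qed.

Lemma Ssym i j : (Hm *m Kmat k u) i j = (Hm *m Kmat k u) j i.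
Proof.
rewrite !Sentry; case: (eqVneq i j) => [->//|ne].
rewrite [kk i j]hk_sym !mul0r; ring.
Qed.

Lemma qf_rows (M : 'M[R]_n) (x : 'I_n -> R) (f : 'I_n -> R) :
  (forall i, \sum_j x i * M i j * x j = f i) -> qf M x = \sum_i f i.
Proof. by move=> h; apply: eq_bigr => i _; rewrite h. Qed.

Lemma kk_ineq (x : 'I_n -> R) :
  \sum_i x i * \sum_j kk i j * x j <= \sum_i (x i ^+ 2 / u i) * \sum_j kk i j * u j.
Proof.
set T1 := \sum_i _; set T2 := \sum_i _.
have e1 : T1 = \sum_i \sum_j kk i j * (x i * x j).
  by apply: eq_bigr => i _; rewrite mulr_sumr; apply: eq_bigr => j _; ring.
have e2 : T2 = \sum_i \sum_j kk i j * (x i ^+ 2 * u j / u i).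
  by apply: eq_bigr => i _; rewrite mulr_sumr; apply: eq_bigr => j _; ring.
have e3 : T2 = \sum_i \sum_j kk i j * (x j ^+ 2 * u i / u j).
  rewrite e2 exchange_big /=; apply: eq_bigr => i _; apply: eq_bigr => j _.
  by rewrite [kk j i]hk_sym.
have h : 0 <= \sum_i \sum_j kk i j * (x i ^+ 2 * u j / u i + x j ^+ 2 * u i / u j - 2%:R * (x i * x j)).
  apply: sumr_ge0 => i _; apply: sumr_ge0 => j _.
  apply: mulr_ge0.
    case: (eqVneq i j) => [->|ne]; first by rewrite hk_diag.
    by apply/ltW/hk_pos; rewrite (inj_eq (@lift_inj _ ord0)).
  have -> : x i ^+ 2 * u j / u i + x j ^+ 2 * u i / u j - 2%:R * (x i * x j)
      = (x i * u j - x j * u i) ^+ 2 / (u i * u j).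
    by field; rewrite (u_neq0 i) (u_neq0 j).
  by apply: divr_ge0; [apply: sqr_ge0 | apply: mulr_ge0; apply: ltW].
have e4 : \sum_i \sum_j kk i j * (x i ^+ 2 * u j / u i + x j ^+ 2 * u i / u j - 2%:R * (x i * x j))
   = T2 + T2 - 2%:R * T1.
  rewrite {1}e2 e3 e1 mulr_sumr -big_split -sumrB /=; apply: eq_bigr => i _.
  rewrite mulr_sumr -big_split -sumrB /=; apply: eq_bigr => j _ /=; ring.
rewrite e4 in h; lra.
Qed.

Lemma posf_S : posf (Hm *m Kmat k u).
Proof.
move=> x [i0 hi0].
set X := \sum_i x i; set Y := \sum_i k0 i * x i.
set cu := cc / u0 u.
have E : qf (Hm *m Kmat k u) x = \sum_i (x i * Dd i * x i + (k0 i + cu) * x i * X + x i * Y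
          - x i * \sum_j kk i j * x j).
  apply: qf_rows => i.
  have -> : \sum_j x i * (Hm *m Kmat k u) i j * x j =
     \sum_j ((i == j)%:R * (x i * Dd i * x i) + ((k0 i + cu) * x i * x j + x i * (k0 j * x j))
             - x i * (kk i j * x j)).
    apply: eq_bigr => j _; rewrite Sentry /cu.
    case: (eqVneq i j) => [->|ne]; first by rewrite !mul1r; ring.
    by rewrite !mul0r; ring.
  rewrite sumrB big_split /= sum_delta big_split /= -mulr_sumr -mulr_sumr.
  rewrite -mulr_sumr -/X -/Y /=; ring.
rewrite E.
set T1 := \sum_i x i * \sum_j kk i j * x j.
set T2 := \sum_i (x i ^+ 2 / u i) * \sum_j kk i j * u j.
set g := fun i => u0 u / u i * (x i + u i * X / u0 u) ^+ 2.
set W := \sum_i k0 i * g i.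
have hT := kk_ineq x; rewrite -/T1 -/T2 in hT.
have Esplit : \sum_i (x i * Dd i * x i + (k0 i + cu) * x i * X + x i * Y
          - x i * \sum_j kk i j * x j)
   = W + (T2 - T1) + \sum_i (x i * (cu * X + Y) - (k0 i * x i * X + k0 i * u i * (X ^+ 2 / u0 u))).
  rewrite /W /T1 /T2 -sumrB -!big_split /=; apply: eq_bigr => i _.
  rewrite /g /Dd; field; by rewrite (u_neq0 i) u0_neq0.
have Erest : \sum_i (x i * (cu * X + Y) - (k0 i * x i * X + k0 i * u i * (X ^+ 2 / u0 u))) = 0.
  rewrite sumrB big_split /= -!mulr_suml -/X -/Y -/cc /cu; field; by rewrite u0_neq0.
rewrite Esplit Erest addr0.
have k0pos i : 0 < k0 i by apply: hk_pos; rewrite eq_sym neq_lift.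
have g0 i : 0 <= g i.
  by rewrite /g; apply: mulr_ge0; [apply: divr_ge0; apply: ltW | apply: sqr_ge0].
have W0 : 0 <= W by apply: sumr_ge0 => i _; apply: mulr_ge0; [apply: ltW|].
suff hW : 0 < W by lra.
rewrite lt0r W0 andbT.
apply/negP => /eqP W00.
have hz := psumr_eq0P (fun i _ => mulr_ge0 (ltW (k0pos i)) (g0 i)) W00.
have xe i : x i = - (u i * X / u0 u).
  have := hz i isT; move/eqP; rewrite mulf_eq0 (gt_eqF (k0pos i)) /= /g mulf_eq0.
  rewrite mulf_eq0 invr_eq0 (negbTE u0_neq0) (negbTE (u_neq0 i)) /= sqrf_eq0 addr_eq0 => /eqP //.
have hX : X = (\sum_i u i) * (- (X / u0 u)).
  rewrite mulr_suml {1}/X; apply: eq_bigr => l _; rewrite xe; ring.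
have su : \sum_i u i = 1 - u0 u by rewrite /u0; ring.
rewrite su in hX.
have hX0 : X / u0 u = 0.
  have -> : X / u0 u = X + (1 - u0 u) * (X / u0 u) by field; rewrite u0_neq0.
  rewrite {1}hX; ring.
have X0 : X = 0 by move/eqP: hX0; rewrite mulf_eq0 invr_eq0 (negbTE u0_neq0) orbF => /eqP.
by move: hi0; rewrite xe X0 mulr0 mul0r oppr0 eqxx.
Qed.

Lemma posf_H : posf Hm.
Proof.
move=> x [i0 hi0].
set X := \sum_i x i.
have E : qf Hm x = \sum_i (x i ^+ 2 / u i) + X ^+ 2 / u0 u.
  rewrite (qf_rows Hm x (fun i => x i ^+ 2 / u i + x i * X / u0 u)).
    rewrite big_split /= -mulr_suml -mulr_suml -/X; congr (_ + _); ring.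
  move=> i.
  have -> : \sum_j x i * Hm i j * x j = \sum_j ((i == j)%:R * (x i ^+ 2 / u i) + x i * x j / u0 u).
    apply: eq_bigr => j _; rewrite mxE.
    case: (eqVneq i j) => [->|ne]; first by rewrite !mul1r; ring.
    by rewrite !mul0r; ring.
  rewrite big_split /= sum_delta -mulr_suml -mulr_sumr -/X; ring.
rewrite E.
have h1 : 0 < \sum_i (x i ^+ 2 / u i).
  apply: (sum_pos _ i0) => [i|]; first by apply: divr_ge0; [apply: sqr_ge0|apply: ltW].
  by apply: divr_gt0 => //; rewrite exprn_even_gt0 //= hi0.
have h2 : 0 <= X ^+ 2 / u0 u by apply: divr_ge0; [apply: sqr_ge0|apply: ltW].
lra.
Qed.


Hypothesis hqr_ge : forall i j : 'I_n, r (lift ord0 i) (lift ord0 j) <= q (lift ord0 i) (lift ord0 j).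
Hypothesis hqr_pd : posdef (\matrix_(i < n, j < n)
                        (q (lift ord0 i) (lift ord0 j) + r (lift ord0 i) (lift ord0 j))).
Local Notation Qm i j := (q (lift ord0 i) (lift ord0 j)).
Local Notation Rm i j := (r (lift ord0 i) (lift ord0 j)).

Lemma Pentry i j : (Hm *m Amat q r u) i j =
  (i == j)%:R * ((qi q u i - qi r u i) / u i) + (Qm i j + Rm i j).
Proof.
rewrite Hmul.
set S := \sum_l u l * (Qm l j + Rm l j).
have col : \sum_l Amat q r u l j = (qi q u j - qi r u j + S) * u0 u.
  under eq_bigr => l _ do rewrite mxE.
  rewrite big_split /= sum_delta'.
  have -> : \sum_l u l * (Qm l j - qi q u j + Rm l j + qi r u j - S)
      = S - (\sum_l u l) * (qi q u j - qi r u j + S).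
    rewrite mulr_suml /S -sumrB; apply: eq_bigr => l _; ring.
  have su : \sum_i u i = 1 - u0 u by rewrite /u0; ring.
  rewrite su; ring.
rewrite col mxE -/S; field; by rewrite (u_neq0 i) u0_neq0.
Qed.

Lemma posf_P : posf (Hm *m Amat q r u).
Proof.
move=> x hx.
set M := \matrix_(i < n, j < n) (Qm i j + Rm i j).
have PM : posf M := posdef_posf M hqr_pd.
set w := fun i => (qi q u i - qi r u i) / u i.
have w0 i : 0 <= w i.
  rewrite /w /qi -sumrB; apply: divr_ge0; last by apply: ltW.
  apply: sumr_ge0 => j _; rewrite -mulrBl; apply: mulr_ge0; last by apply: ltW.
  by rewrite subr_ge0.
rewrite (qf_rows _ x (fun i => x i ^+ 2 * w i + \sum_j x i * M i j * x j)).
  rewrite big_split /=.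
  have : 0 <= \sum_i x i ^+ 2 * w i by apply: sumr_ge0 => i _; apply: mulr_ge0; [apply: sqr_ge0|].
  have := PM x hx; rewrite /qf; lra.
move=> i.
have -> : \sum_j x i * (Hm *m Amat q r u) i j * x j
    = \sum_j ((i == j)%:R * (x i ^+ 2 * w i) + x i * M i j * x j).
  apply: eq_bigr => j _; rewrite Pentry /M mxE /w.
  case: (eqVneq i j) => [->|ne]; first by rewrite !mul1r; ring.
  by rewrite !mul0r; ring.
by rewrite big_split /= sum_delta.
Qed.

End Spec.
Arguments Hm {R n}.

Theorem proposition11 (R : rcfType) (n : nat) (hn : (0 < n)%N)
    (k q r : 'M[R]_n.+1)
    (hk_sym : forall i j, k i j = k j i)
    (hk_pos : forall i j, i != j -> 0 < k i j)
    (hk_diag : forall i, k i i = 0)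
    (hq_nn : forall i j, 0 <= q i j)
    (hr_nn : forall i j, 0 <= r i j)
    (hr_sym : forall i j, r i j = r j i)
    (hq_i0 : forall i, q i ord0 = 0)
    (hq_0i : forall i, q ord0 i = 0)
    (hr_i0 : forall i, r i ord0 = 0)
    (hr_ii : forall i, r i i = 0)
    (hqr_pd : posdef (\matrix_(i < n, j < n)
                        (q (lift ord0 i) (lift ord0 j) + r (lift ord0 i) (lift ord0 j))))
    (hqr_ge : forall i j : 'I_n, r (lift ord0 i) (lift ord0 j) <= q (lift ord0 i) (lift ord0 j))
    (u : 'I_n -> R) (hu : in_simplex u) :
  Kmat k u \in unitmx /\ pos_stable (invmx (Kmat k u) *m Amat q r u).
Proof.
case: hu => hu1 hsum.
have hupos : forall i, 0 < u i by move=> i; case: (hu1 i).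
have hu0 : 0 < u0 u by rewrite /u0 subr_gt0.
have PS : posf (Hm u *m Kmat k u) by apply: posf_S.
have SS : forall i j, (Hm u *m Kmat k u) i j = (Hm u *m Kmat k u) j i by apply: Ssym.
have PH : posf (Hm u) by apply: posf_H.
have PP : posf (Hm u *m Amat q r u) by apply: posf_P.
have Su : Hm u *m Kmat k u \in unitmx := posf_unit _ PS.
have Hu : Hm u \in unitmx := posf_unit _ PH.
have Ku : Kmat k u \in unitmx by move: Su; rewrite unitmx_mul => /andP[].
split => // z /eigenvalueP [v Hv nz].
have Hv' : v *m map_mx (real_complex R) (invmx (Kmat k u) *m Amat q r u) = z *: v := Hv.
rewrite map_mxM map_invmx in Hv'.
set Kc := map_mx (real_complex R) (Kmat k u) in Hv'.
set Ac := map_mx (real_complex R) (Amat q r u) in Hv'.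
set Hc := map_mx (real_complex R) (Hm u).
have Kcu : Kc \in unitmx by rewrite map_unitmx.
have Hcu : Hc \in unitmx by rewrite map_unitmx.
set y := v *m invmx Kc *m invmx Hc.
have yS : y *m map_mx (real_complex R) (Hm u *m Kmat k u) = v.
  by rewrite map_mxM -/Hc -/Kc /y !mulmxA (mulmxKV Hcu) (mulmxKV Kcu).
apply: (stable_key (Hm u *m Kmat k u) (Hm u *m Amat q r u) y z) => //.
  apply/negP => /eqP y0; move: yS; rewrite y0 mul0mx => v0.
  by rewrite -v0 eqxx in nz.
rewrite yS map_mxM -/Hc -/Ac /y !mulmxA (mulmxKV Hcu) -mulmxA Hv'.
done.
Qed.
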